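(* Let $G$ be a group and let $H_1, H_2, \ldots, H_n$ be the successive vertices of a path $\gamma$ in $\mathcal{C}(G)$. If $H_i \subseteq H_{i+1}$ for all $i$, then $\gamma$ is a geodesic.
   Context: For subgroups $A,B$ of $G$, $c(A,B) = [A:A\cap B][B:A\cap B]$. The commensurability graph $\mathcal{C}(G)$ is the weighted graph whose vertices are all subgroups of $G$, with an edge between $A$ and $B$ if and only if $A\cap B$ has finite index in both $A$ and $B$, this edge having weight $c(A,B)$. The length of a path is the product of its edge weights; the distance between two vertices is the minimal length of a path joining them, and a geodesic is a path whose length equals the distance between its endpoints. *)

(* Defs.v *)
From Stdlib Require Import List Arith.
Import ListNotations.

Record Group := {
  carrier :> Type;
  gmul : carrier -> carrier -> carrier;
  gone : carrier;
  ginv : carrier -> carrier;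
  gmulA : forall x y z, gmul x (gmul y z) = gmul (gmul x y) z;
  gmul1l : forall x, gmul gone x = x;
  gmulVl : forall x, gmul (ginv x) x = gone
}.

Section Defs.
Variable G : Group.

Definition subgroup (H : G -> Prop) : Prop :=
  H (gone G) /\
  (forall x y, H x -> H y -> H (gmul G x y)) /\
  (forall x, H x -> H (ginv G x)).

Definition setI (A B : G -> Prop) : G -> Prop := fun x => A x /\ B x.

Definition subset (A B : G -> Prop) : Prop := forall x, A x -> B x.

(** [index_is A K n]: the left cosets xK (x in A) of K (a subgroup of A) are
    exactly n in number, i.e. [A : K] = n (finite). *)
Definition index_is (A K : G -> Prop) (n : nat) : Prop :=
  exists s : list G,
    length s = n /\
    (forall x, In x s -> A x) /\
    (forall i j, i < n -> j < n -> i <> j ->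
        ~ K (gmul G (ginv G (nth i s (gone G))) (nth j s (gone G)))) /\
    (forall a, A a -> exists x, In x s /\ K (gmul G (ginv G x) a)).

(** Edge of the commensurability graph between A and B with weight
    c(A,B) = [A : A∩B][B : A∩B] (an edge exists iff both indices are finite). *)
Definition cweight (A B : G -> Prop) (w : nat) : Prop :=
  exists m n, index_is A (setI A B) m /\ index_is B (setI A B) n /\ w = m * n.

(** [plen p L]: the list p of vertices is a path in C(G) (nonempty, consecutive
    vertices joined by edges) whose length (product of edge weights) is L. *)
Inductive plen : list (G -> Prop) -> nat -> Prop :=
  | plen_one : forall H, plen [H] 1
  | plen_cons : forall H K p w L,
      cweight H K w -> plen (K :: p) L -> plen (H :: K :: p) (w * L).

Definition geodesic (p : list (G -> Prop)) : Prop :=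
  exists L, plen p L /\
    forall q L', Forall subgroup q -> plen q L' ->
      hd (fun _ => False) q = hd (fun _ => False) p ->
      last q (fun _ => False) = last p (fun _ => False) ->
      L <= L'.

Inductive ascending : list (G -> Prop) -> Prop :=
  | asc_nil : ascending []
  | asc_one : forall H, ascending [H]
  | asc_cons : forall H K p, subset H K -> ascending (K :: p) -> ascending (H :: K :: p).

End Defs.

(* Main.v *)
Require Import Defs.
From Stdlib Require Import List Arith Lia Classical.
Import ListNotations.

Local Notation "x ** y" := (gmul _ x y) (at level 40, left associativity).

Lemma mulA {G : Group} (x y z : G) : x ** (y ** z) = x ** y ** z.
Proof. apply gmulA. Qed.
Lemma mul1g {G : Group} (x : G) : gone G ** x = x.
Proof. apply gmul1l. Qed.
Lemma mulVg {G : Group} (x : G) : ginv G x ** x = gone G.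
Proof. apply gmulVl. Qed.
Lemma mulKg {G : Group} (x y : G) : ginv G x ** (x ** y) = y.
Proof. rewrite mulA, mulVg, mul1g. reflexivity. Qed.
Lemma idem1 {G : Group} (y : G) : y ** y = y -> y = gone G.
Proof. intros H. rewrite <- (mulKg y y), H. apply mulVg. Qed.
Lemma mulgV {G : Group} (x : G) : x ** ginv G x = gone G.
Proof.
  apply idem1. rewrite <- mulA, (mulA (ginv G x)), mulVg, mul1g. reflexivity.
Qed.
Lemma mulg1 {G : Group} (x : G) : x ** gone G = x.
Proof. rewrite <- (mulVg x), mulA, mulgV, mul1g. reflexivity. Qed.
Lemma mulKVg {G : Group} (x y : G) : x ** (ginv G x ** y) = y.
Proof. rewrite mulA, mulgV, mul1g. reflexivity. Qed.
Lemma inv_uniq {G : Group} (a b : G) : a ** b = gone G -> ginv G a = b.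
Proof. intros H. rewrite <- (mulKg a b), H, mulg1. reflexivity. Qed.
Lemma ginv_mul {G : Group} (x y : G) : ginv G (x ** y) = ginv G y ** ginv G x.
Proof. apply inv_uniq. rewrite <- !mulA, mulKVg, mulgV. reflexivity. Qed.
Lemma ginv_inv {G : Group} (x : G) : ginv G (ginv G x) = x.
Proof. apply inv_uniq. apply mulVg. Qed.
Lemma ginv_one {G : Group} : ginv G (gone G) = gone G.
Proof. apply inv_uniq. apply mul1g. Qed.

Ltac gsimpl := repeat progress (rewrite ?ginv_mul, ?ginv_inv, ?ginv_one, <- ?mulA,
   ?mulKg, ?mulKVg, ?mulgV, ?mulVg, ?mulg1, ?mul1g).

Definition rel {G : Group} (K : G -> Prop) (x y : G) : Prop := K (ginv G x ** y).


Lemma rel_refl {G : Group} (K : G -> Prop) x : subgroup G K -> rel K x x.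
Proof. intros [H1 _]. unfold rel. rewrite mulVg. exact H1. Qed.
Lemma rel_sym {G : Group} (K : G -> Prop) x y : subgroup G K -> rel K x y -> rel K y x.
Proof.
  intros [_ [_ Hi]] H. unfold rel in *. apply Hi in H. rewrite ginv_mul, ginv_inv in H. exact H.
Qed.
Lemma rel_trans {G : Group} (K : G -> Prop) x y z : subgroup G K ->
  rel K x y -> rel K y z -> rel K x z.
Proof.
  intros [_ [Hm _]] H1 H2. unfold rel in *. pose proof (Hm _ _ H1 H2) as H.
  rewrite <- mulA, mulKVg in H. exact H.
Qed.

Lemma subgroup_setI {G : Group} (A B : G -> Prop) :
  subgroup G A -> subgroup G B -> subgroup G (setI G A B).
Proof.
  intros [a1 [a2 a3]] [b1 [b2 b3]]. unfold setI. repeat split; firstorder.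
Qed.

Lemma nth_to_fop {T} (P : T -> T -> Prop) (s : list T) d :
  (forall i j, i < length s -> j < length s -> i <> j -> P (nth i s d) (nth j s d)) ->
  ForallOrdPairs P s.
Proof.
  induction s as [|x s IH]; intros H; constructor.
  - rewrite Forall_forall. intros y Hy. destruct (In_nth _ _ d Hy) as [j [Hj Hn]].
    specialize (H 0 (S j)). simpl in H. subst. apply H; lia.
  - apply IH. intros i j Hi Hj Hij. apply (H (S i) (S j)); simpl; lia.
Qed.

Lemma fop_to_nth {T} (P : T -> T -> Prop) (s : list T) d :
  ForallOrdPairs P s -> forall i j, i < j -> j < length s -> P (nth i s d) (nth j s d).
Proof.
  induction 1 as [|a l Ha Hl IH]; intros i j Hij Hj; simpl in *. lia.
  destruct i, j; try lia.
  - rewrite Forall_forall in Ha. apply Ha. apply nth_In. lia.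
  - apply IH; lia.
Qed.

Lemma fop_app {T} (P : T -> T -> Prop) l1 l2 :
  ForallOrdPairs P l1 -> ForallOrdPairs P l2 ->
  (forall x y, In x l1 -> In y l2 -> P x y) -> ForallOrdPairs P (l1 ++ l2).
Proof.
  induction 1 as [|a l Ha Hl IH]; intros H2 Hc; simpl; auto.
  constructor.
  - apply Forall_app. split; auto. rewrite Forall_forall. intros y Hy. apply Hc; simpl; auto.
  - apply IH; auto. intros x y Hx Hy. apply Hc; simpl; auto.
Qed.

Lemma fop_map {T U} (P : U -> U -> Prop) (P' : T -> T -> Prop) (f : T -> U) l :
  ForallOrdPairs P' l -> (forall x y, P' x y -> P (f x) (f y)) ->
  ForallOrdPairs P (map f l).
Proof.
  induction 1 as [|a l Ha Hl IH]; intros Hf; simpl; constructor; auto.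
  rewrite Forall_forall in *. intros y Hy. apply in_map_iff in Hy.
  destruct Hy as [x [<- Hx]]. auto.
Qed.

Lemma length_flat {T U} (f : T -> list U) s k :
  (forall a, length (f a) = k) -> length (flat_map f s) = length s * k.
Proof.
  intros H. induction s; simpl; auto. rewrite length_app, IHs, H. lia.
Qed.

Lemma ph {T} (R : T -> T -> Prop) (Rsym : forall x y, R x y -> R y x)
  (Rtrans : forall x y z, R x y -> R y z -> R x z) s :
  ForallOrdPairs (fun x y => ~ R x y) s ->
  forall t, (forall x, In x s -> exists y, In y t /\ R y x) -> length s <= length t.
Proof.
  induction 1 as [|x s' Hx Hs IH]; intros t Hc. simpl; lia.
  destruct (Hc x (or_introl eq_refl)) as [y [Hy Ryx]].
  destruct (in_split _ _ Hy) as [t1 [t2 ->]].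
  assert (length s' <= length (t1 ++ t2)).
  { apply IH. intros z Hz. destruct (Hc z (or_intror Hz)) as [y' [Hy' Ry'z]].
    apply in_app_or in Hy'. destruct Hy' as [H1|[<-|H2]].
    - exists y'; split; auto using in_or_app.
    - exfalso. rewrite Forall_forall in Hx. apply (Hx z Hz). eauto.
    - exists y'; split; auto using in_or_app. }
  simpl. rewrite length_app in *. simpl. lia.
Qed.

Lemma dedup {T} (R : T -> T -> Prop) (Rrefl : forall x, R x x)
  (Rsym : forall x y, R x y -> R y x) v :
  exists v', length v' <= length v /\ (forall x, In x v' -> In x v) /\
    ForallOrdPairs (fun x y => ~ R x y) v' /\
    (forall y, In y v -> exists z, In z v' /\ R z y).
Proof.
  induction v as [|x v IH].
  - exists []. repeat split; auto. constructor. intros y [].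
  - destruct IH as [v' [Hl [Hi [Hf Hc]]]].
    destruct (classic (exists z, In z v' /\ R z x)) as [[z [Hz Rzx]]|Hn].
    + exists v'. repeat split; simpl; auto.
      intros y [<-|Hy]; eauto.
    + exists (x :: v'). repeat split; simpl; try lia.
      * intros y [<-|Hy]; auto.
      * constructor; auto. rewrite Forall_forall. intros y Hy Rxy.
        apply Hn. exists y; split; auto.
      * intros y [<-|Hy]. exists x; split; auto.
        destruct (Hc y Hy) as [z [Hz Rz]]. exists z; split; auto.
Qed.

Lemma select {T} (A : T -> Prop) (R R' : T -> T -> Prop)
  (R'sym : forall x y, R' x y -> R' y x)
  (R'trans : forall x y z, R' x y -> R' y z -> R' x z)
  (Hcomp : forall a b, A a -> A b -> R' a b -> R a b) u :
  exists v, length v <= length u /\ (forall x, In x v -> A x) /\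
    forall a, A a -> (exists x, In x u /\ R' x a) -> exists y, In y v /\ R y a.
Proof.
  induction u as [|x u IH].
  - exists []. repeat split; auto. intros x []. intros a _ [x [[] _]].
  - destruct IH as [v [Hl [Hi Hc]]].
    destruct (classic (exists a0, A a0 /\ R' x a0)) as [[a0 [Ha0 Rxa0]]|Hn].
    + exists (a0 :: v). repeat split; simpl; try lia.
      * intros y [<-|Hy]; auto.
      * intros a Ha [x' [[<-|Hx'] Rx']].
        -- exists a0; split; auto. apply Hcomp; auto. eauto.
        -- destruct (Hc a Ha) as [y [Hy Ry]]; eauto.
    + exists v. repeat split; simpl; try lia; auto.
      intros a Ha [x' [[<-|Hx'] Rx']].
      -- exfalso; eauto.
      -- eauto.
Qed.

Lemma idx_fop {G : Group} (A K : G -> Prop) n : index_is G A K n ->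
  exists s, length s = n /\ (forall x, In x s -> A x) /\
    ForallOrdPairs (fun x y => ~ rel K x y) s /\
    (forall a, A a -> exists x, In x s /\ rel K x a).
Proof.
  intros [s [Hl [Hi [Hp Hc]]]]. exists s. repeat split; auto.
  apply (nth_to_fop _ _ (gone G)). intros i j Hi' Hj' Hij. unfold rel.
  apply Hp; lia.
Qed.

Lemma fop_idx {G : Group} (A K : G -> Prop) s : subgroup G K ->
  (forall x, In x s -> A x) -> ForallOrdPairs (fun x y => ~ rel K x y) s ->
  (forall a, A a -> exists x, In x s /\ rel K x a) -> index_is G A K (length s).
Proof.
  intros HK Hi Hf Hc. exists s. repeat split; auto.
  intros i j Hi' Hj' Hij. destruct (Nat.lt_gt_cases i j) as [[Hlt|Hgt] _]; auto.
  - exact (fop_to_nth _ _ (gone G) Hf i j Hlt Hj').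
  - intro Hk. apply (fop_to_nth _ _ (gone G) Hf j i Hgt Hi'). apply rel_sym; auto.
Qed.

Lemma cover_idx {G : Group} (A K : G -> Prop) (R' : G -> G -> Prop) u :
  subgroup G K ->
  (forall x y, R' x y -> R' y x) ->
  (forall x y z, R' x y -> R' y z -> R' x z) ->
  (forall a b, A a -> A b -> R' a b -> rel K a b) ->
  (forall a, A a -> exists x, In x u /\ R' x a) ->
  exists n, n <= length u /\ index_is G A K n.
Proof.
  intros HK Rs Rt Hcomp Hcov.
  destruct (select A (rel K) R' Rs Rt Hcomp u) as [v [Hl [Hi Hc]]].
  destruct (dedup (rel K) (fun x => rel_refl K x HK) (fun x y => rel_sym K x y HK) v)
    as [v' [Hl' [Hi' [Hf' Hc']]]].
  exists (length v'). split. lia.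
  apply fop_idx; auto.
  intros a Ha. destruct (Hc a Ha (Hcov a Ha)) as [y [Hy Ry]].
  destruct (Hc' y Hy) as [z [Hz Rz]]. exists z; split; auto.
  eapply rel_trans; eauto.
Qed.

Lemma index_ext {G : Group} (A A' K K' : G -> Prop) n :
  (forall x, A x <-> A' x) -> (forall x, K x <-> K' x) ->
  index_is G A K n -> index_is G A' K' n.
Proof.
  intros HA HK [s [Hl [Hi [Hp Hc]]]]. exists s. repeat split; auto.
  - intros x Hx. apply HA; auto.
  - intros i j a b c Hk. apply (Hp i j a b c). apply HK; auto.
  - intros a Ha. apply HA in Ha. destruct (Hc a Ha) as [x [Hx Kx]].
    exists x; split; auto. apply HK; auto.
Qed.

Lemma index_ge1 {G : Group} (A K : G -> Prop) n : A (gone G) -> index_is G A K n -> 1 <= n.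
Proof.
  intros H1 [s [Hl [Hi [Hp Hc]]]]. destruct (Hc _ H1) as [x [Hx _]].
  destruct s; simpl in *; [contradiction|lia].
Qed.

Lemma index_le1 {G : Group} (H H' : G -> Prop) m : subgroup G H -> subset G H H' ->
  index_is G H (setI G H H') m -> m <= 1.
Proof.
  intros [h1 [h2 h3]] Hs [s [Hl [Hi [Hp Hc]]]].
  destruct (le_gt_dec m 1) as [|Hgt]; auto. exfalso.
  assert (Hh : H (ginv G (nth 0 s (gone G)) ** nth 1 s (gone G))).
  { apply h2. apply h3. apply Hi, nth_In; lia. apply Hi, nth_In; lia. }
  apply (Hp 0 1); try lia. split; auto.
Qed.

Lemma idx_self {G : Group} (H : G -> Prop) : subgroup G H -> index_is G H (setI G H H) 1.
Proof.
  intros [h1 h2]. exists [gone G]. repeat split; auto.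
  - intros x [<-|[]]; auto.
  - intros i j Hi Hj Hij. lia.
  - intros a Ha. exists (gone G). split; simpl; auto. rewrite ginv_one, mul1g. split; auto.
Qed.

Lemma tower_lb {G : Group} (C H' J K : G -> Prop) N' k N :
  subgroup G C -> subgroup G H' -> subgroup G K ->
  subset G H' C -> subset G K J -> subset G K H' ->
  index_is G C H' N' -> index_is G H' J k -> index_is G C K N -> N' * k <= N.
Proof.
  intros HC HH HK sHC sKJ sKH I1 I2 I3.
  destruct (idx_fop _ _ _ I1) as [s [Hls [His [Hfs Hcs]]]].
  destruct (idx_fop _ _ _ I2) as [t [Hlt [Hit [Hft Hct]]]].
  destruct (idx_fop _ _ _ I3) as [u [Hlu [Hiu [Hfu Hcu]]]].
  set (prod := flat_map (fun a => map (fun b => a ** b) t) s).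
  assert (Hlp : length prod = N' * k).
  { unfold prod. rewrite (length_flat _ _ k); [lia|]. intros a. rewrite length_map; auto. }
  rewrite <- Hlp, <- Hlu.
  apply (ph (rel K) (fun x y => rel_sym K x y HK) (fun x y z => rel_trans K x y z HK)).
  - unfold prod. clear -Hfs Hft Hit HH sKJ sKH. induction Hfs as [|a l Ha Hl IH]; simpl.
    constructor. apply fop_app; auto.
    + apply (fop_map _ _ _ _ Hft). intros x y Hn Hk. apply Hn. apply sKJ.
      unfold rel in *. rewrite ginv_mul, <- mulA, mulKg in Hk. exact Hk.
    + intros x y Hx Hy. apply in_map_iff in Hx. destruct Hx as [b [<- Hb]].
      apply in_flat_map in Hy. destruct Hy as [a' [Ha' Hy]].
      apply in_map_iff in Hy. destruct Hy as [b' [<- Hb']].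
      rewrite Forall_forall in Ha. intro Hk. apply (Ha a' Ha').
      unfold rel in *. apply sKH in Hk.
      destruct HH as [_ [hm hi]].
      assert (E : ginv G a ** a' = b ** (ginv G (a ** b) ** (a' ** b')) ** ginv G b').
      { gsimpl. reflexivity. }
      rewrite E. apply hm; [apply hm|]; auto.
  - intros x Hx. unfold prod in Hx. apply in_flat_map in Hx. destruct Hx as [a [Ha Hx]].
    apply in_map_iff in Hx. destruct Hx as [b [<- Hb]].
    apply Hcu. destruct HC as [_ [hm _]]. apply hm; auto.
Qed.

Lemma half {G : Group} (A B C : G -> Prop) m k :
  subgroup G A -> subgroup G B -> subgroup G C ->
  index_is G A (setI G A B) m -> index_is G B (setI G B C) k ->
  exists n, n <= m * k /\ index_is G A (setI G A C) n.
Proof.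
  intros HA HB HC [s [Hls [His [_ Hcs]]]] [t [Hlt [Hit [_ Hct]]]].
  set (u := flat_map (fun a => map (fun b => a ** b) t) s).
  assert (Hlu : length u = m * k).
  { unfold u. rewrite (length_flat _ _ k); [lia|]. intros a. rewrite length_map; auto. }
  rewrite <- Hlu.
  apply (cover_idx A (setI G A C) (rel C) u (subgroup_setI _ _ HA HC)
    (fun x y => rel_sym C x y HC) (fun x y z => rel_trans C x y z HC)).
  - intros a b Ha Hb Hr. split; auto. destruct HA as [_ [hm hi]]. auto.
  - intros a Ha. destruct (Hcs a Ha) as [x [Hx [_ HBx]]].
    destruct (Hct _ HBx) as [y [Hy [_ HCy]]].
    exists (x ** y). split.
    + unfold u. apply in_flat_map. exists x. split; auto. apply in_map_iff. eauto.
    + unfold rel. rewrite ginv_mul, <- mulA. exact HCy.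
Qed.

Lemma tri {G : Group} (A B C : G -> Prop) w1 w2 :
  subgroup G A -> subgroup G B -> subgroup G C ->
  cweight G A B w1 -> cweight G B C w2 -> exists w, cweight G A C w /\ w <= w1 * w2.
Proof.
  intros HA HB HC [a1 [b1 [H1 [H2 ->]]]] [b2 [c2 [H3 [H4 ->]]]].
  destruct (half A B C a1 b2 HA HB HC H1 H3) as [n1 [Hn1 I1]].
  assert (H4' : index_is G C (setI G C B) c2).
  { revert H4. apply index_ext; unfold setI; tauto. }
  assert (H2' : index_is G B (setI G B A) b1).
  { revert H2. apply index_ext; unfold setI; tauto. }
  destruct (half C B A c2 b1 HC HB HA H4' H2') as [n2 [Hn2 I2]].
  exists (n1 * n2). split.
  - exists n1, n2. repeat split; auto. revert I2. apply index_ext; unfold setI; tauto.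
  - transitivity ((a1 * b2) * (c2 * b1)); [apply Nat.mul_le_mono; auto|].
    apply Nat.eq_le_incl. ring.
Qed.

Lemma path_tri {G : Group} q L' : plen G q L' -> Forall (subgroup G) q ->
  forall d, exists w, cweight G (hd d q) (last q d) w /\ w <= L'.
Proof.
  induction 1 as [H | H K p w L Hw Hp IH]; intros HF d.
  - inversion HF; subst. exists 1. split; auto. exists 1, 1. simpl.
    repeat split; apply idx_self; auto.
  - inversion HF; subst. destruct (IH H3 d) as [w' [Hw' Hle]].
    change (hd d (H :: K :: p)) with H. change (last (H :: K :: p) d) with (last (K :: p) d).
    change (hd d (K :: p)) with K in Hw'.
    assert (HL : subgroup G (last (K :: p) d)).
    { clear -H3. revert K H3. induction p as [|a p IHp]; intros K H3.
      - inversion H3; auto.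
      - change (last (K :: a :: p) d) with (last (a :: p) d). inversion H3; auto. }
    inversion H3; subst.
    destruct (tri H K (last (K :: p) d) w w' H2 H4 HL Hw Hw') as [w'' [Hc Hl]].
    exists w''. split; auto. transitivity (w * w'); auto. apply Nat.mul_le_mono_l; auto.
Qed.

Lemma forall_last {G : Group} (P : (G -> Prop) -> Prop) p K d :
  Forall P (K :: p) -> P (last (K :: p) d).
Proof.
  revert K. induction p as [|a p IHp]; intros K H3.
  - inversion H3; auto.
  - change (last (K :: a :: p) d) with (last (a :: p) d). inversion H3; auto.
Qed.

Lemma asc_last {G : Group} p K d : ascending G (K :: p) -> subset G K (last (K :: p) d).
Proof.
  revert K. induction p as [|a p IHp]; intros K H.
  - intros x; auto.
  - change (last (K :: a :: p) d) with (last (a :: p) d). inversion H; subst.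
    intros x Hx. apply IHp; auto.
Qed.

Lemma chain {G : Group} gamma L : plen G gamma L -> Forall (subgroup G) gamma ->
  ascending G gamma -> forall d K N, subgroup G K -> subset G K (hd d gamma) ->
  index_is G (last gamma d) K N -> L <= N.
Proof.
  induction 1 as [H | H K' p w L0 Hw Hp IH]; intros HF HA d K N HK HsK HN.
  - inversion HF; subst. destruct H2 as [h1 _]. simpl in HN. eapply index_ge1; eauto.
  - change (last (H :: K' :: p) d) with (last (K' :: p) d) in HN.
    change (hd d (H :: K' :: p)) with H in HsK.
    inversion HF; subst. inversion HA; subst.
    set (C := last (K' :: p) d) in *.
    assert (HC : subgroup G C) by (apply forall_last; auto).
    assert (sKC : subset G K' C) by (apply asc_last; auto).
    inversion H3; subst.
    destruct Hw as [m [k [Hm [Hk ->]]]].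
    destruct (idx_fop _ _ _ HN) as [s [Hls [His [_ Hcs]]]].
    destruct (cover_idx C K' (rel K') s H4 (fun x y => rel_sym K' x y H4)
       (fun x y z => rel_trans K' x y z H4)) as [N' [_ HN']].
    { auto. }
    { intros a Ha. destruct (Hcs a Ha) as [x [Hx Kx]]. exists x; split; auto.
      apply H5, HsK, Kx. }
    assert (HL0 : L0 <= N').
    { apply (IH H3 H7 d K' N' H4); auto. intros x; auto. }
    assert (Hm1 : m <= 1) by (exact (index_le1 H K' m H2 H5 Hm)).
    assert (Ht : N' * k <= N).
    { apply (tower_lb C K' (setI G H K') K N' k N HC H4 HK sKC); auto.
      - intros x Hx. split; auto.
      - intros x Hx. auto. }
    transitivity (k * L0). { replace (m * k * L0) with (m * (k * L0)) by ring.
      destruct m as [|[|m]]; lia. }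
    transitivity (k * N'). { apply Nat.mul_le_mono_l; auto. }
    rewrite Nat.mul_comm; auto.
Qed.

Theorem corollary8 (G : Group) (gamma : list (G -> Prop)) (L : nat) :
  Forall (@subgroup G) gamma ->
  plen G gamma L ->
  ascending G gamma ->
  geodesic G gamma.
Proof.
  intros HF Hp HA. exists L. split; auto. intros q L' HFq Hq Hhd Hlast.
  destruct (path_tri q L' Hq HFq (fun _ => False)) as [w [Hw Hle]].
  rewrite Hhd, Hlast in Hw.
  destruct Hw as [m' [n' [Hm' [Hn' ->]]]].
  destruct gamma as [|H1 rest]; [inversion Hp|].
  set (C := last (H1 :: rest) (fun _ => False)) in *.
  change (hd (fun _ => False) (H1 :: rest)) with H1 in *.
  assert (HC : subgroup G C) by (apply forall_last; auto).
  pose proof (Forall_inv HF) as H2.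
  assert (HL : L <= n').
  { apply (chain _ L Hp HF HA (fun _ => False) (setI G H1 C) n'); auto.
    - apply subgroup_setI; auto.
    - intros x [Hx _]; auto. }
  assert (1 <= m') by (eapply index_ge1; [destruct H2; eauto | eauto]).
  nia.
Qed.
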